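(* Let $k\ge 2$ and $n\ge 1$. For any $c\in\mathbb{N}$, there exists a classical $k$-party SMP protocol for the $k$-party equality function on $n$-bit inputs (the function of $x_1,\dots,x_k\in\{0,1\}^n$ that equals $1$ if and only if $x_1=x_2=\dots=x_k$), in which XOR-shared randomness is used and each player sends $c$ bits to the referee, such that: if $x_1=x_2=\dots=x_k$, the referee's answer is always $1$; otherwise, the referee's answer is $0$ with probability $1-1/2^c$.
   Context: The $k$-party SMP model: players $A_1,\dots,A_k$, where $A_i$ receives $x_i$, each send one message to a referee, who computes the output from the messages. XOR-shared randomness: each player $A_i$ receives an arbitrarily long random string $r_i$ (independent of the input) such that every $k-1$ of the strings $r_1,\dots,r_k$ are uniform and mutually independent, while the bitwise XOR $r_1\oplus\dots\oplus r_k$ is identically $0$. *)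

(* Defs.v *)
(* Probabilities are rationals (finite discrete distributions). *)
From mathcomp Require Import all_boot all_order all_algebra.
Set Implicit Arguments. Unset Strict Implicit. Unset Printing Implicit Defensive.
Import Order.TTheory GRing.Theory Num.Theory.
Local Open Scope ring_scope.

Definition bitstr (n : nat) := {ffun 'I_n -> bool}.

Definition rand_profile (k m : nat) := {ffun 'I_k -> bitstr m}.

Definition xor_zero (k m : nat) (r : rand_profile k m) : Prop :=
  forall j : 'I_m, \big[addb/false]_(i < k) r i j = false.

(* D is a probability distribution on rand_profile k m realizing XOR-shared
   randomness: every k-1 of the strings are uniform and mutually independent
   (i.e. the joint marginal on any k-1 coordinates is uniform on
   ({0,1}^m)^(k-1)), and the XOR of all k strings is identically 0. *)
Definition xor_shared (k m : nat) (D : {ffun rand_profile k m -> rat}) : Prop :=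
  [/\ (forall r, 0 <= D r),
      \sum_(r : rand_profile k m) D r = 1,
      (forall r, D r != 0 -> xor_zero r) &
      (forall (j : 'I_k) (y : rand_profile k m),
         \sum_(r : rand_profile k m | [forall i, (i != j) ==> (r i == y i)]) D r
           = ((2%:R : rat) ^+ (m * (k - 1)))^-1)].

Definition smp_output (k n m c : nat)
  (enc : 'I_k -> bitstr n -> bitstr m -> bitstr c)
  (ref : {ffun 'I_k -> bitstr c} -> bool)
  (x : {ffun 'I_k -> bitstr n}) (r : rand_profile k m) : bool :=
  ref [ffun i => enc i (x i) (r i)].

Definition prob_out0 (k n m c : nat)
  (enc : 'I_k -> bitstr n -> bitstr m -> bitstr c)
  (ref : {ffun 'I_k -> bitstr c} -> bool)
  (D : {ffun rand_profile k m -> rat}) (x : {ffun 'I_k -> bitstr n}) : rat :=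
  \sum_(r : rand_profile k m | ~~ smp_output enc ref x r) D r.

Definition all_equal (k n : nat) (x : {ffun 'I_k -> bitstr n}) : Prop :=
  forall i j : 'I_k, x i = x j.

(* Main.v *)
Require Import Defs.
From mathcomp Require Import all_boot all_order all_algebra.
Import Order.TTheory GRing.Theory Num.Theory.
Local Open Scope ring_scope.

Section Helpers.

Lemma bigx_andr (I : finType) (P : pred I) (F : I -> bool) c :
  \big[addb/false]_(i | P i) (F i && c) = (\big[addb/false]_(i | P i) F i) && c.
Proof.
apply: (big_rec2 (fun y1 y2 => y1 = y2 && c)) => // i y1 y2 _ ->.
by rewrite andb_addl.
Qed.

Lemma bigx_andl (I : finType) (P : pred I) (F : I -> bool) c :
  \big[addb/false]_(i | P i) (c && F i) = c && (\big[addb/false]_(i | P i) F i).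
Proof.
apply: (big_rec2 (fun y1 y2 => y1 = c && y2)) => [|i y1 y2 _ ->].
  by rewrite andbF.
by rewrite andb_addr.
Qed.

Lemma bigx_pred1 {I : finType} (i0 : I) (F : I -> bool) :
  \big[addb/false]_i ((i == i0) && F i) = F i0.
Proof.
rewrite (bigD1 i0) //= eqxx /= big1 ?addbF // => i /negbTE ->; by [].
Qed.

Lemma bigx_split (I : finType) (F G : I -> bool) :
  \big[addb/false]_i (F i (+) G i) =
  (\big[addb/false]_i F i) (+) (\big[addb/false]_i G i).
Proof. exact: big_split. Qed.

Lemma bigx_pair (k : nat) (i0 j0 : 'I_k) (t : bool) :
  \big[addb/false]_i (((i == i0) (+) (i == j0)) && t) = false.
Proof.
rewrite (eq_bigr (fun i => ((i == i0) && t) (+) ((i == j0) && t))); last first.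
  by move=> i _; rewrite andb_addl.
by rewrite bigx_split (bigx_pred1 i0 (fun _ => t)) (bigx_pred1 j0 (fun _ => t)) addbb.
Qed.

End Helpers.


Definition mm (c n : nat) := #|{: 'I_c * 'I_n}|.
Definition idx {c n : nat} (a : 'I_c) (b : 'I_n) : 'I_(mm c n) := enum_rank (a, b).

Definition enc {k n c : nat} (i : 'I_k) (xi : bitstr n) (ri : bitstr (mm c n)) : bitstr c :=
  [ffun a : 'I_c => \big[addb/false]_(b < n) (ri (idx a b) && xi b)].
Definition refe {k c : nat} (msgs : {ffun 'I_k -> bitstr c}) : bool :=
  [forall a, \big[addb/false]_(i < k) msgs i a == false].

Definition xzb {k m : nat} (r : rand_profile k m) : bool :=
  [forall j, \big[addb/false]_(i < k) r i j == false].

Lemma xzbP k m (r : rand_profile k m) : reflect (xor_zero r) (xzb r).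
Proof.
apply: (iffP forallP) => H j; first by apply/eqP; exact: H.
by rewrite H.
Qed.

Lemma xz_uniq k m (j : 'I_k) (r r' : rand_profile k m) :
  xor_zero r -> xor_zero r' -> (forall i, i != j -> r' i = r i) -> r' = r.
Proof.
move=> Hr Hr' Hag; apply/ffunP => i.
case: (eqVneq i j) => [->|ne]; last exact: Hag.
apply/ffunP => b.
have h1 := Hr b; have h2 := Hr' b.
rewrite (bigD1 j) //= in h1; rewrite (bigD1 j) //= in h2.
have e : \big[addb/false]_(i0 < k | i0 != j) r' i0 b =
         \big[addb/false]_(i0 < k | i0 != j) r i0 b.
  by apply: eq_bigr => i0 ne0; rewrite Hag.
move: h1 h2; rewrite e.
by case: (r j b); case: (r' j b); case: (\big[addb/false]_(i0 < k | i0 != j) r i0 b).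
Qed.

Lemma D_char k m (D : {ffun rand_profile k m -> rat}) (j : 'I_k) :
  xor_shared D -> exists u, forall r, D r = if xzb r then u else 0.
Proof.
case=> _ _ Hsup Hmarg.
exists ((2%:R : rat) ^+ (m * (k - 1)))^-1 => r.
case: (boolP (xzb r)) => [/xzbP xr | nx].
  rewrite -(Hmarg j r) (bigD1 r) /=; last by apply/forallP => i; apply/implyP.
  rewrite big1 ?addr0 // => r' /andP [/forallP Pr' ne].
  apply/eqP; apply: contraR ne => /Hsup xr'.
  apply/eqP; apply: (@xz_uniq k m j r r' xr xr') => i ni.
  by apply/eqP; move: (Pr' i); rewrite ni.
apply/eqP; apply: contraR nx => /Hsup xr; exact/xzbP.
Qed.

Definition Sf {k n c} (x : {ffun 'I_k -> bitstr n}) (r : rand_profile k (mm c n)) : bitstr c :=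
  [ffun a : 'I_c => \big[addb/false]_(i < k) enc i (x i) (r i) a].

Definition Af {c n} (p : 'I_n) (w : bitstr c) (j : 'I_(mm c n)) : bool :=
  [exists a : 'I_c, (j == idx a p) && w a].

Definition phi {k c n} (i0 j0 : 'I_k) (p : 'I_n) (w : bitstr c)
  (r : rand_profile k (mm c n)) : rand_profile k (mm c n) :=
  [ffun i => [ffun j => r i j (+) (((i == i0) (+) (i == j0)) && Af p w j)]].

Lemma Af_idx c n (p : 'I_n) (w : bitstr c) a b : Af p w (idx a b) = (b == p) && w a.
Proof.
rewrite /Af; apply/existsP/idP => [[a' /andP [/eqP e wa']] | /andP [/eqP -> wa]].
  by move/enum_rank_inj: e => [-> ->]; rewrite eqxx.
by exists a; rewrite eqxx.
Qed.

Lemma phiK {k c n} (i0 j0 : 'I_k) (p : 'I_n) (w : bitstr c) r : phi i0 j0 p w (phi i0 j0 p w r) = r.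
Proof. by apply/ffunP => i; apply/ffunP => j; rewrite !ffunE addbK. Qed.

Lemma xz_phi {k c n} (i0 j0 : 'I_k) (p : 'I_n) (w : bitstr c) r (ne : i0 != j0) :
  xzb (phi i0 j0 p w r) = xzb r.
Proof.
apply: eq_forallb => j.
under eq_bigr do rewrite !ffunE.
by rewrite bigx_split bigx_pair addbF.
Qed.

Lemma S_phi {k c n} (x : {ffun 'I_k -> bitstr n}) (i0 j0 : 'I_k) (p : 'I_n) (w : bitstr c) r :
  x i0 p != x j0 p ->
  Sf x (phi i0 j0 p w r) = [ffun a => Sf x r a (+) w a].
Proof.
move=> Hp; apply/ffunP => a; rewrite !ffunE.
have E : forall i, enc i (x i) (phi i0 j0 p w r i) a =
   enc i (x i) (r i) a (+)
   (((i == i0) && (w a && x i p)) (+) ((i == j0) && (w a && x i p))).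
  move=> i; rewrite !ffunE.
  under eq_bigr do rewrite !ffunE Af_idx andb_addl.
  rewrite bigx_split; congr (_ (+) _).
  rewrite (eq_bigr (fun b => (b == p) && ((((i == i0) && (w a && x i b)) (+) ((i == j0) && (w a && x i b)))))); last first.
    by move=> b _; case: (b == p); case: (i == i0); case: (i == j0); case: (w a); case: (x i b).
  exact: (bigx_pred1 p (fun b => ((i == i0) && (w a && x i b)) (+) ((i == j0) && (w a && x i b)))).
under eq_bigr do rewrite E.
rewrite bigx_split bigx_split !bigx_pred1; congr (_ (+) _).
by move: Hp; case: (x i0 p); case: (x j0 p); case: (w a).
Qed.

Theorem claim3 (k n : nat) (hk : (2 <= k)%N) (hn : (1 <= n)%N) (c : nat) :
  exists (m : nat) (enc : 'I_k -> bitstr n -> bitstr m -> bitstr c)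
         (ref : {ffun 'I_k -> bitstr c} -> bool),
  forall D : {ffun rand_profile k m -> rat}, xor_shared D ->
  forall x : {ffun 'I_k -> bitstr n},
    (all_equal x -> forall r, D r != 0 -> smp_output enc ref x r = true) /\
    (~ all_equal x -> prob_out0 enc ref D x = 1 - ((2%:R : rat) ^+ c)^-1).
Proof.
exists (mm c n), enc, refe => D HD x; split.
  move=> Heq r Dr.
  have xz : xor_zero r by case: HD => _ _ Hsup _; exact: Hsup.
  have i0 : 'I_k := Ordinal (leq_trans (isT : (1 < 2)%N) hk).
  rewrite /smp_output /refe; apply/forallP => a; apply/eqP.
  rewrite (eq_bigr (fun i => \big[addb/false]_(b < n) (r i (idx a b) && x i0 b))); last first.
    by move=> i _; rewrite !ffunE (Heq i i0).
  rewrite exchange_big /=; apply: big1 => b _.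
  by rewrite bigx_andr xz.
move=> Hne.
have [i0 [j0 Hij]] : exists i0 j0, x i0 != x j0.
  case: (boolP [exists i, exists j, x i != x j]) => [/existsP [i0 /existsP [j0 h]] | H].
    by exists i0, j0.
  exfalso; apply: Hne => i j; apply/eqP; move: H.
  rewrite negb_exists => /forallP /(_ i); rewrite negb_exists => /forallP /(_ j).
  by rewrite negbK.
have [p Hp] : exists p, x i0 p != x j0 p.
  case: (boolP [exists p, x i0 p != x j0 p]) => [/existsP //|H].
  case/eqP: Hij; apply/ffunP => q; apply/eqP; move: H.
  by rewrite negb_exists => /forallP /(_ q); rewrite negbK.
have ne : i0 != j0 by apply: contraNneq Hij => ->.
have [u Du] := @D_char _ _ D j0 HD.
pose z0 : bitstr c := [ffun _ => false].
have out : forall r, smp_output enc refe x r = (Sf x r == z0).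
  move=> r.
  have e : forall a, \big[addb/false]_i [ffun i => enc i (x i) (r i)] i a = Sf x r a.
    by move=> a; rewrite [RHS]ffunE; apply: eq_bigr => i _; rewrite ffunE.
  rewrite /smp_output /refe; apply/forallP/eqP => [H|H].
    by apply/ffunP => a; rewrite [RHS]ffunE -e; apply/eqP; exact: H.
  by move=> a; rewrite e H ffunE.
have Dphi : forall (w : bitstr c) r, D (phi i0 j0 p w r) = D r.
  by move=> w r; rewrite !Du xz_phi.
pose P (z : bitstr c) := \sum_(r | Sf x r == z) D r.
have PP : forall z, P z = P z0.
  move=> z; rewrite /P [RHS](reindex_inj (can_inj (phiK i0 j0 p z))).
  apply: eq_big => [r|r _]; last by rewrite Dphi.
  rewrite S_phi //; apply/eqP/eqP => h; apply/ffunP => a; move/ffunP: h => /(_ a).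
    by rewrite !ffunE => ->; case: (z a).
  have -> : [ffun a0 => Sf x r a0 (+) z a0] a = Sf x r a (+) z a by rewrite ffunE.
  have -> : z0 a = false by rewrite ffunE.
  by case: (Sf x r a); case: (z a).
have sum1 : \sum_r D r = \sum_(z : bitstr c) P z.
  by rewrite (partition_big (Sf x) xpredT).
have tot : P z0 *+ (2 ^ c) = 1.
  case: HD => _ Hs _ _.
  rewrite -Hs sum1 (eq_bigr (fun _ => P z0)); last by move=> z _; exact: PP.
  by rewrite sumr_const card_ffun card_bool card_ord.
have hP : P z0 = ((2%:R : rat) ^+ c)^-1.
  have e : P z0 * ((2%:R : rat) ^+ c) = 1 by rewrite -natrX mulr_natr.
  have nz : (2%:R : rat) ^+ c != 0 by rewrite expf_neq0.
  by rewrite -(mulfK nz (P z0)) e div1r.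
rewrite /prob_out0 (eq_bigl (fun r => Sf x r != z0)); last by move=> r; rewrite out.
have spl : \sum_r D r = P z0 + \sum_(r | Sf x r != z0) D r.
  by rewrite (bigID (fun r => Sf x r == z0)).
case: HD => _ Hs _ _.
rewrite Hs in spl.
rewrite hP in spl.
by apply/eqP; rewrite eq_sym subr_eq addrC -spl.
Qed.
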